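(* Let $x\in\mathbb C^n\setminus\Delta$ be such that the weighted arrangement $(\mathcal A(x),a)$ is unbalanced. Then for every $j\in J$ the operator of multiplication by $[a_j/f_j]$ in $\mathcal O(C_{\mathcal A(x),a})$ equals the operator $K_j(x)$; that is, for every $k$-element sequence $i_1,\dots,i_k$ in $J$, $$\Big[\frac{a_j}{f_j}\Big]\cdot w_{i_1,\dots,i_k}=K_j(x)\,w_{i_1,\dots,i_k}.$$
   Context: Let $0<k<n$, $J=\{1,\dots,n\}$. On $\mathbb C^k$ (coordinates $t_1,\dots,t_k$) fix nonzero linear functions $g_j=b^1_jt_1+\dots+b^k_jt_k$, $j\in J$, spanning $(\mathbb C^k)^*$. For $x\in\mathbb C^n$, $\mathcal A(x)$ is the arrangement in $\mathbb C^k$ of hyperplanes $H_j(x)=\{f_j=0\}$, $f_j=g_j+x_j$, with complement $U(\mathcal A(x))$. For $I=\{i_1,\dots,i_k\}$ (ordered) let $d_{i_1,\dots,i_k}=\det_{i,l=1}^k(b^i_{i_l})$. Circuits and discriminant: a subset $C\subset J$ is a circuit if $(g_i)_{i\in C}$ are linearly dependent but every proper subset is independent. For each circuit $C$ fix a nonzero collection $(\lambda^C_i)_{i\in J}$, $\lambda^C_i=0$ for $i\notin C$, with $\sum_i\lambda^C_ig_i=0$, and set $f_C(z)=\sum_i\lambda^C_iz_i$. The discriminant is $\Delta=\bigcup_C\{f_C=0\}\subset\mathbb C^n$; for $x\notin\Delta$, $\mathcal A(x)$ has normal crossings. A subset of $J$ is independent if the corresponding $g_i$ are linearly independent. Weights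 $a\in(\mathbb C^\times)^n$; $\Phi=\sum_ja_j\log f_j$. $\mathcal O(C_{\mathcal A(x),a})=\mathcal O(U(\mathcal A(x)))/I$, with $I$ the ideal generated by $\partial\Phi/\partial t_i=\sum_jb^i_ja_j/f_j$, $i=1,\dots,k$; $[f]$ is the class of $f$. Marked elements: $w_{i_1,\dots,i_k}=d_{i_1,\dots,i_k}\,[a_{i_1}/f_{i_1}]\cdots[a_{i_k}/f_{i_k}]\in\mathcal O(C_{\mathcal A(x),a})$; they are skew-symmetric in the indices and vanish for dependent index sets, and (for unbalanced weight) they span $\mathcal O(C_{\mathcal A(x),a})$. Operators: for a circuit $C$, listed in some order as $i_1,\dots,i_r$, and $C_m=C\setminus\{i_m\}$, define $L_C$ on marked elements: $L_C(w_{j_1,\dots,j_k})=0$ if $|\{j_1,\dots,j_k\}\cap C|<r-1$; if $\{j_1,\dots,j_k\}\cap C=C_m$, write (using skew-symmetry) $w_{j_1,\dots,j_k}=\pm w_{i_1,\dots,\widehat{i_m},\dots,i_r,s_1,\dots,s_{k-r+1}}$ with $\{s_1,\dots,s_{k-r+1}\}=\{j_1,\dots,j_k\}\setminus C_m$, and set $L_C(w_{i_1,\dots,\widehat{i_m},\dots,i_r,s_1,\dots,s_{k-r+1}})=(-1)^m\sum_{l=1}^r(-1)^la_{i_l}w_{i_1,\dots,\widehat{i_l},\dots,i_r,s_1,\dots,s_{k-r+1}}$. Then $K_j(x)=\sum_{C}\frac{\lambda^C_j}{f_C(x)}L_C$, the sum over all circuits. Unbalanced: for an arrangement in $\mathbb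 C^k$ with weights $a_j$, adjoin $H_\infty=\mathbb P^k\setminus\mathbb C^k$ with weight $-\sum_ja_j$; the weight of an edge (nonempty intersection of hyperplanes) is the sum of the weights of the hyperplanes containing it; an edge is dense if the hyperplanes containing it form an irreducible arrangement (not splittable, after a coordinate change, into two nonempty groups in disjoint coordinates). The weighted arrangement is unbalanced if no dense edge of the projective arrangement has weight $0$. *)

(* Defs.v *)
From mathcomp Require Import all_boot all_algebra.
From mathcomp Require Import boolp reals.
From mathcomp.real_closed Require Import complex.
From mathcomp Require Import mpoly.

Set Implicit Arguments.
Unset Strict Implicit.
Unset Printing Implicit Defensive.

Import GRing.Theory Num.Theory.
Local Open Scope ring_scope.

(* Data: b : 'M_(k,n) with  b i j = b^i_j, so g_j = sum_i b i j * t_i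
   (the j-th column of b); x : C^n; weights a : C^n; t : C^k.          *)

Definition fj (R : realType) (k n : nat) (b : 'M[R[i]]_(k, n))
  (x : 'I_n -> R[i]) (j : 'I_n) (t : 'I_k -> R[i]) : R[i] :=
  \sum_(i < k) b i j * t i + x j.

Definition inU (R : realType) (k n : nat) (b : 'M[R[i]]_(k, n))
  (x : 'I_n -> R[i]) (t : 'I_k -> R[i]) : Prop :=
  forall j : 'I_n, fj b x j t != 0.

(* O(U(A(x))) = C[t][1/f_1,...,1/f_n], realised as functions on U:
   g is regular iff g = p / prod_j f_j^{m_j} on U for a polynomial p. *)
Definition regular (R : realType) (k n : nat) (b : 'M[R[i]]_(k, n))
  (x : 'I_n -> R[i]) (g : ('I_k -> R[i]) -> R[i]) : Prop :=
  exists (p : {mpoly R[i][k]}) (m : 'I_n -> nat),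
    forall t, inU b x t -> g t = p.@[t] / \prod_(j < n) (fj b x j t) ^+ (m j).

Definition dPhi (R : realType) (k n : nat) (b : 'M[R[i]]_(k, n))
  (x a : 'I_n -> R[i]) (i : 'I_k) (t : 'I_k -> R[i]) : R[i] :=
  \sum_(j < n) b i j * a j / fj b x j t.

(* [g] = [h] in O(C_{A(x),a}) = O(U(A(x))) / I, I the ideal generated by
   the dPhi i: g - h = sum_i c_i dPhi_i with c_i in O(U(A(x))).          *)
Definition qeq (R : realType) (k n : nat) (b : 'M[R[i]]_(k, n))
  (x a : 'I_n -> R[i]) (g h : ('I_k -> R[i]) -> R[i]) : Prop :=
  exists c : 'I_k -> ('I_k -> R[i]) -> R[i],
    (forall i, regular b x (c i)) /\
    forall t, inU b x t -> g t - h t = \sum_(i < k) c i t * dPhi b x a i t.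

Definition dmk (R : realType) (k n : nat) (b : 'M[R[i]]_(k, n))
  (s : seq 'I_n) : R[i] :=
  \det (\matrix_(i < k, l < k) nth 0 [seq b i j | j <- s] l).

Definition wmk (R : realType) (k n : nat) (b : 'M[R[i]]_(k, n))
  (x a : 'I_n -> R[i]) (s : seq 'I_n) (t : 'I_k -> R[i]) : R[i] :=
  dmk b s * \prod_(j <- s) (a j / fj b x j t).

Definition indep (R : realType) (k n : nat) (b : 'M[R[i]]_(k, n))
  (S : {set 'I_n}) : bool :=
  row_free (\matrix_(l < #|S|, i < k) b i (enum_val l)).

Definition circuit (R : realType) (k n : nat) (b : 'M[R[i]]_(k, n))
  (C : {set 'I_n}) : bool :=
  ~~ indep b C && [forall D : {set 'I_n}, (D \proper C) ==> indep b D].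

Definition circuit_coeffs (R : realType) (k n : nat) (b : 'M[R[i]]_(k, n))
  (lam : {set 'I_n} -> 'I_n -> R[i]) : Prop :=
  forall C : {set 'I_n}, circuit b C ->
    [/\ forall i, i \notin C -> lam C i = 0,
        exists i, lam C i != 0
      & forall r : 'I_k, \sum_(i < n) lam C i * b r i = 0].

Definition fC (R : realType) (n : nat) (lam : {set 'I_n} -> 'I_n -> R[i])
  (C : {set 'I_n}) (z : 'I_n -> R[i]) : R[i] :=
  \sum_(i < n) lam C i * z i.

Definition notin_disc (R : realType) (k n : nat) (b : 'M[R[i]]_(k, n))
  (lam : {set 'I_n} -> 'I_n -> R[i]) (z : 'I_n -> R[i]) : Prop :=
  forall C : {set 'I_n}, circuit b C -> fC lam C z != 0.

(* number of inversions of the permutation pi with s_p = u_{pi(p)} ;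
   (-1)^invs s u is the sign with  w_s = (-1)^(invs s u) w_u  *)
Definition invs (n : nat) (s u : seq 'I_n) : nat :=
  \sum_(y <- s) \sum_(z <- s) ((index y s < index z s) && (index z u < index y u))%N.

(* L_C(w_s) as an element of O(U) (a combination of marked elements).
   C is listed increasingly as e = i_1,...,i_r (0-based positions here).
   If s is duplicate-free and {s} meets C in C minus one element i_m, then
   w_s = eps * w_{C_m, s'} with s' the elements of s outside C (in their order
   in s), and L_C(w_s) = eps (-1)^m sum_l (-1)^l a_{i_l} w_{C_l, s'}.
   Otherwise (|{s} cap C| < r-1, or w_s = 0 because s has a repetition or
   contains C) the value is 0.                                            *)
Definition LC (R : realType) (k n : nat) (b : 'M[R[i]]_(k, n))
  (x a : 'I_n -> R[i]) (C : {set 'I_n}) (s : seq 'I_n) (t : 'I_k -> R[i])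
  : R[i] :=
  let e := enum C in
  let S := [set j in s] in
  if uniq s && (#|S :&: C| == #|C|.-1)%N then
    match [pick im in C | im \notin S] with
    | Some im =>
        let s' := [seq j <- s | j \notin C] in
        let u := rem im e ++ s' in
        (-1) ^+ invs s u * (-1) ^+ index im e *
        \sum_(il <- e) (-1) ^+ index il e * a il * wmk b x a (rem il e ++ s') t
    | None => 0
    end
  else 0.

Definition Kj (R : realType) (k n : nat) (b : 'M[R[i]]_(k, n))
  (lam : {set 'I_n} -> 'I_n -> R[i]) (x a : 'I_n -> R[i]) (j : 'I_n)
  (s : seq 'I_n) (t : 'I_k -> R[i]) : R[i] :=
  \sum_(C : {set 'I_n} | circuit b C) lam C j / fC lam C x * LC b x a C s t.

(* Homogeneous coordinates (t_0, t_1..t_k) on C^{k+1}; hyperplanes indexed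
   by option 'I_n: Some j is the closure of H_j(x) : x_j t_0 + g_j(t) = 0,
   None is H_infty : t_0 = 0.  nv gives the defining linear form.       *)
Definition nv (R : realType) (k n : nat) (b : 'M[R[i]]_(k, n))
  (x : 'I_n -> R[i]) (h : option 'I_n) (p : 'I_k.+1) : R[i] :=
  match h with
  | Some j => match unlift ord0 p with None => x j | Some i => b i j end
  | None => if p == ord0 then 1 else 0
  end.

Definition lform (R : realType) (k n : nat) (b : 'M[R[i]]_(k, n))
  (x : 'I_n -> R[i]) (h : option 'I_n) (y : 'I_k.+1 -> R[i]) : R[i] :=
  \sum_(p < k.+1) nv b x h p * y p.

Definition inInter (R : realType) (k n : nat) (b : 'M[R[i]]_(k, n))
  (x : 'I_n -> R[i]) (S : {set option 'I_n}) (y : 'I_k.+1 -> R[i]) : Prop :=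
  forall h, h \in S -> lform b x h y = 0.

Definition is_edge (R : realType) (k n : nat) (b : 'M[R[i]]_(k, n))
  (x : 'I_n -> R[i]) (S : {set option 'I_n}) : Prop :=
  S != set0 /\ exists y, y != (fun _ => 0) /\ inInter b x S y.

Definition contains (R : realType) (k n : nat) (b : 'M[R[i]]_(k, n))
  (x : 'I_n -> R[i]) (S : {set option 'I_n}) (h : option 'I_n) : Prop :=
  forall y, inInter b x S y -> lform b x h y = 0.

Definition hweight (R : realType) (n : nat) (a : 'I_n -> R[i])
  (h : option 'I_n) : R[i] :=
  match h with Some j => a j | None => - \sum_(j < n) a j end.

(* an arrangement (given by a set T of hyperplanes of C^{k+1}) is reducible
   if after a linear coordinate change t = M y it splits into two nonempty
   groups A, B depending on disjoint sets of coordinates (P and its complement) *)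
Definition reducible (R : realType) (k n : nat) (b : 'M[R[i]]_(k, n))
  (x : 'I_n -> R[i]) (T : option 'I_n -> Prop) : Prop :=
  exists (A B : option 'I_n -> Prop) (M : 'M[R[i]]_(k.+1)) (P : {set 'I_k.+1}),
    [/\ (forall h, (T h <-> A h \/ B h) /\ ~ (A h /\ B h)),
        (exists h, A h) /\ (exists h, B h), M \in unitmx,
        (forall h q, A h -> q \notin P -> \sum_(p < k.+1) nv b x h p * M p q = 0)
      & (forall h q, B h -> q \in P -> \sum_(p < k.+1) nv b x h p * M p q = 0)].

Definition dense (R : realType) (k n : nat) (b : 'M[R[i]]_(k, n))
  (x : 'I_n -> R[i]) (S : {set option 'I_n}) : Prop :=
  ~ reducible b x (contains b x S).

Definition unbalanced (R : realType) (k n : nat) (b : 'M[R[i]]_(k, n))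
  (x a : 'I_n -> R[i]) : Prop :=
  forall S : {set option 'I_n}, is_edge b x S -> dense b x S ->
    \sum_(h : option 'I_n) (if `[< contains b x S h >] then hweight a h else 0) != 0.

(* Main.v *)
Require Import Defs.
From mathcomp Require Import all_boot all_algebra all_fingroup.
From mathcomp Require Import boolp reals.
From mathcomp.real_closed Require Import complex.
From mathcomp Require Import mpoly.
From mathcomp Require Import zify ring lra.
Set Implicit Arguments.
Unset Strict Implicit.
Unset Printing Implicit Defensive.
Import GRing.Theory Num.Theory.
Local Open Scope ring_scope.



Lemma index_rem (T : eqType) (x y : T) e : x != y ->
  (index y (rem x e) + (index x e < index y e))%N = index y e.
Proof.
move=> nxy; elim: e => [//|z e IH] /=.
case: (eqVneq z x) => [->|nzx].
  by rewrite (negPf nxy) /= addn1.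
rewrite /=.
case: ifP => // _.
by rewrite ltnS addSn IH.
Qed.

Lemma count_index (T : eqType) (u : seq T) i : uniq u ->
  count (fun c => (index c u < i)%N) u = minn i (size u).
Proof.
elim: u i => [|z u IH] i /=; first by rewrite minn0.
case/andP => zu uu.
rewrite eqxx.
rewrite (@eq_in_count _ _ (fun c => (index c u < i.-1)%N)); last first.
  move=> c cu /=; have -> : (z == c) = false by apply/negbTE; apply: contraNneq zu => ->.
  by case: i.
rewrite IH //; case: i => [|i] /=; first by rewrite min0n.
by rewrite minnSS add1n.
Qed.

Lemma sum_bool_count (T : Type) (r : seq T) (P : pred T) :
  (\sum_(j <- r) (P j : nat))%N = count P r.
Proof. by elim: r => [|z r IH]; rewrite ?big_nil ?big_cons ?IH. Qed.

Lemma ltn_rem_aux (C D Y C' D' : nat) : (C' + (Y < C))%N = C -> (D' + (Y < D))%N = D ->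
  C != Y -> D != Y -> (D < C)%N = (D' < C')%N.
Proof.
case: (ltnP Y C) => h1; case: (ltnP Y D) => h2 /= ec ed hc hd;
  apply/idP/idP => h; lia.
Qed.

Lemma invs_cons (n : nat) (y : 'I_n) s1 u : uniq (y :: s1) -> perm_eq (y :: s1) u ->
  invs (y :: s1) u = (index y u + invs s1 (rem y u))%N.
Proof.
move=> us pu.
have yu : y \in u by rewrite -(perm_mem pu) mem_head.
have uu : uniq u by rewrite -(perm_uniq pu).
have ps1 : perm_eq s1 (rem y u).
  by rewrite -(perm_cons y); apply: (perm_trans pu); apply: perm_to_rem.
move: us => /= /andP [ys1 us1].
rewrite /invs big_cons big_cons /= eqxx ltnn /= add0n.
congr (_ + _)%N.
  rewrite (eq_big_seq (fun c => ((index c u < index y u)%N : nat))); last first.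
    move=> c cs1 /=; have -> : (y == c) = false.
      by apply/negbTE; apply: contraNneq ys1 => ->.
    by [].
  rewrite sum_bool_count.
  rewrite ((seq.permP ps1) _) (rem_filter _ uu) count_filter.
  rewrite (@eq_count _ _ (fun c => (index c u < index y u)%N)); last first.
    move=> c /=; case: (eqVneq c y) => [->|]; by rewrite ?ltnn ?andbF ?andbT.
  rewrite count_index // ; apply/minn_idPl; exact: index_size.
apply: eq_big_seq => c cs1.
have nyc : (y == c) = false by apply/negbTE; apply: contraNneq ys1 => ->.
rewrite big_cons /= nyc eqxx /= add0n.
apply: eq_big_seq => d ds1.
have nyd : (y == d) = false by apply/negbTE; apply: contraNneq ys1 => ->.
rewrite nyd ltnS.
have cu : c \in u by rewrite -(perm_mem pu) inE cs1 orbT.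
have du : d \in u by rewrite -(perm_mem pu) inE ds1 orbT.
have ec := index_rem u (negbT nyc); have ed := index_rem u (negbT nyd).
have hc : index c u != index y u by apply: contraFneq nyc => /(congr1 (nth y u)); rewrite !nth_index // => ->.
have hd : index d u != index y u by apply: contraFneq nyd => /(congr1 (nth y u)); rewrite !nth_index // => ->.
congr (_ && _).
exact: ltn_rem_aux ec ed hc hd.
Qed.

Section Det.
Variable (R : realType) (k n : nat) (b : 'M[R[i]]_(k, n)).

Definition Mb (s : seq 'I_n) : 'M[R[i]]_k :=
  \matrix_(i < k, l < k) nth 0 [seq b i j | j <- s] l.

Lemma dmkE s : dmk b s = \det (Mb s). Proof. by []. Qed.

Lemma dmk_swap (p q : seq 'I_n) y z : size (p ++ y :: z :: q) = k ->
  dmk b (p ++ y :: z :: q) = - dmk b (p ++ z :: y :: q).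
Proof.
move=> hs.
have h1 : (size p < k)%N by move: hs; rewrite size_cat /=; lia.
have h2 : ((size p).+1 < k)%N by move: hs; rewrite size_cat /=; lia.
pose i1 := Ordinal h1; pose i2 := Ordinal h2.
rewrite !dmkE.
have -> : Mb (p ++ y :: z :: q) = xcol i1 i2 (Mb (p ++ z :: y :: q)).
  apply/matrixP => i l; rewrite !mxE !map_cat !nth_cat !size_map.
  case: tpermP => [->|->|hl1 hl2] /=.
  - have -> : ((size p).+1 < size p)%N = false by lia.
    by rewrite ltnn subnn subSnn.
  - have -> : ((size p).+1 < size p)%N = false by lia.
    by rewrite ltnn subnn subSnn.
  - case: ltnP => // hl; case hd: (nat_of_ord l - size p)%N => [|[|d]] //=.
    + by case: hl1; apply: val_inj => /=; lia.
    + by case: hl2; apply: val_inj => /=; lia.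
rewrite xcolE det_mulmx det_perm odd_tperm.
have -> : (i1 != i2) by rewrite -(inj_eq val_inj) /= neq_ltn ltnSn.
by rewrite expr1 mulrN1.
Qed.


Lemma dmk_front (y : 'I_n) r q p : y \in q -> size (p ++ q ++ r) = k ->
  dmk b (p ++ q ++ r) = (-1) ^+ index y q * dmk b (p ++ y :: rem y q ++ r).
Proof.
elim: q p => [//|z q IH] p /=.
case: eqP => [<- _ _|/eqP nyz]; first by rewrite expr0 mul1r.
rewrite in_cons eq_sym (negPf nyz) /= => yq hs.
have -> : p ++ z :: q ++ r = rcons p z ++ q ++ r by rewrite cat_rcons.
rewrite IH //; last by rewrite cat_rcons.
rewrite cat_rcons dmk_swap.
  by rewrite exprS; ring.
move: hs; rewrite !size_cat /= !size_cat size_rem //.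
by case: q yq IH => //= *; lia.
Qed.


Lemma sign2 (m : nat) : (-1) ^+ m * (-1) ^+ m = 1 :> R[i].
Proof. by rewrite -exprD addnn -mul2n exprM sqrrN expr1n expr1n. Qed.

Lemma dmk_perm s : forall u p, uniq s -> perm_eq s u -> size (p ++ s) = k ->
  dmk b (p ++ s) = (-1) ^+ invs s u * dmk b (p ++ u).
Proof.
elim: s => [|y s1 IH] u p us pu hs.
  have -> : u = [::] by apply/nilP; rewrite /nilp -(perm_size pu).
  by rewrite /invs big_nil expr0 mul1r.
have yu : y \in u by rewrite -(perm_mem pu) mem_head.
have hsu : size (p ++ u ++ [::]) = k by rewrite cats0 size_cat -(perm_size pu) -size_cat.
have e1 := dmk_front yu hsu; rewrite !cats0 in e1.
have ps1 : perm_eq s1 (rem y u).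
  by rewrite -(perm_cons y); apply: (perm_trans pu); apply: perm_to_rem.
move: (us) => /= /andP [ys1 us1].
have e2 := IH (rem y u) (rcons p y) us1 ps1; rewrite !cat_rcons in e2.
rewrite e2 //.
by rewrite e1 invs_cons // exprD mulrACA sign2 mul1r.
Qed.

Lemma dmk_nuniq s : size s = k -> ~~ uniq s -> dmk b s = 0.
Proof.
move=> hs nu.
have [y sy] : exists y, y \in s.
  by case: s hs nu => [//|y s] _ _; exists y; rewrite mem_head.
case/(uniqPn y): nu => p [q [pq qs eqn]].
have hp : (p < k)%N by rewrite -hs; lia.
have hq : (q < k)%N by rewrite -hs.
rewrite dmkE -det_tr.
apply: (@determinant_alternate _ _ _ (Ordinal hp) (Ordinal hq)).
  by rewrite -(inj_eq val_inj) /= neq_ltn pq.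
move=> r; rewrite !mxE /= (nth_map y) ?(nth_map y) ?eqn //; lia.
Qed.

Lemma dmk_lin0 (k0 : (0 < k)%N) (c : 'I_n -> R[i]) y rho :
  (forall r, b r y = \sum_l c l * b r l) ->
  dmk b (y :: rho) = \sum_l c l * dmk b (l :: rho).
Proof.
move=> hy.
pose c0 := Ordinal k0.
have ecof : forall z r, cofactor (Mb (z :: rho)) r c0 = cofactor (Mb (y :: rho)) r c0.
  move=> z r; rewrite /cofactor; congr (_ * \det _).
  by apply/matrixP => i l; rewrite !mxE.
have eent : forall z r, Mb (z :: rho) r c0 = b r z by move=> z r; rewrite mxE.
rewrite dmkE (expand_det_col _ c0).
under eq_bigr => r _ do rewrite eent hy mulr_suml.
rewrite exchange_big /=; apply: eq_bigr => l _.
rewrite dmkE (expand_det_col _ c0) big_distrr /=; apply: eq_bigr => r _.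
by rewrite eent (ecof l) /cofactor !mulrA.
Qed.

End Det.


Section Lin.
Variable (R : realType) (k n : nat) (b : 'M[R[i]]_(k, n)).

Lemma indep_rel (D : {set 'I_n}) (mu : 'I_n -> R[i]) : indep b D ->
  (forall i, i \notin D -> mu i = 0) ->
  (forall r, \sum_i mu i * b r i = 0) -> forall i, mu i = 0.
Proof.
move=> hD hsupp hrel i.
case: (boolP (i \in D)) => iD; last exact: hsupp.
pose A := \matrix_(l < #|D|, r < k) b r (enum_val l).
pose v : 'rV[R[i]]_#|D| := \row_l mu (enum_val l).
have hv : v *m A = 0.
  apply/rowP => r; rewrite !mxE; transitivity (\sum_i mu i * b r i); last exact: hrel.
  symmetry; rewrite (bigID (mem D)) /= [X in _ + X = _]big1 ?addr0; last first.
    by move=> l /hsupp ->; rewrite mul0r.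
  rewrite big_enum_val; apply: eq_bigr => l _; by rewrite !mxE.
have : v == 0 by rewrite -(mulmx_free_eq0 _ hD) hv.
move/eqP/rowP/(_ (enum_rank_in iD i)); rewrite !mxE (enum_rankK_in iD iD) => ->.
by [].
Qed.

Lemma circuit_supp (lam : {set 'I_n} -> 'I_n -> R[i]) C :
  circuit_coeffs b lam -> circuit b C -> forall i, i \in C -> lam C i != 0.
Proof.
move=> hcc hC i iC; apply/negP => /eqP h0.
have [hz [l hl] hrel] := hcc C hC.
case/andP: hC => _ /forallP /(_ (C :\ i)).
rewrite (properD1 iC) /= => hind.
move: hl; rewrite (@indep_rel _ (lam C) hind) ?eqxx //.
move=> z; rewrite in_setD1 negb_and negbK => /orP [/eqP -> //|]; exact: hz.
Qed.

Lemma rel_s (s : seq 'I_n) (y0 : 'I_n) (mu : 'I_n -> R[i]) :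
  uniq s -> size s = k -> dmk b s != 0 ->
  (forall i, i \notin s -> mu i = 0) ->
  (forall r, \sum_i mu i * b r i = 0) -> forall i, mu i = 0.
Proof.
move=> us hs hd hsupp hrel i.
case: (boolP (i \in s)) => iS; last exact: hsupp.
pose w : 'rV[R[i]]_k := \row_p mu (nth y0 s p).
have hw : w *m (Mb b s)^T = 0.
  apply/rowP => r; rewrite !mxE; transitivity (\sum_i mu i * b r i); last exact: hrel.
  symmetry; rewrite (bigID (mem s)) /= [X in _ + X = _]big1 ?addr0; last first.
    by move=> l /hsupp ->; rewrite mul0r.
  rewrite -big_uniq // (big_nth y0) hs big_mkord.
  apply: eq_bigr => p _; rewrite !mxE (nth_map y0) ?hs //.
have : w == 0.
  apply: contraNT hd => wn0; rewrite dmkE -det_tr; apply/det0P; by exists w.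
move/eqP/rowP => hw0.
have hi : (index i s < k)%N by rewrite -hs index_mem.
by move: (hw0 (Ordinal hi)); rewrite !mxE nth_index.
Qed.

End Lin.


Definition validb (n : nat) (s : seq 'I_n) (C : {set 'I_n}) (m : 'I_n) :=
  [&& m \in C, m \notin s & C :\ m \subset [set x in s]].

Lemma sign_cases (R : ringType) (A : nat) : ((-1) ^+ A = 1 :> R) \/ ((-1) ^+ A = -1 :> R).
Proof. by rewrite -signr_odd; case: odd; [right|left]; rewrite ?expr1 ?expr0. Qed.

Section LCsec.
Variable (R : realType) (k n : nat) (b : 'M[R[i]]_(k, n)).
Variable (lam : {set 'I_n} -> 'I_n -> R[i]) (x a : 'I_n -> R[i]).
Hypothesis k0 : (0 < k)%N.
Hypothesis hcc : circuit_coeffs b lam.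
Hypothesis ha : forall j, a j != 0.

Lemma sum_lam_f C t : circuit b C ->
  \sum_(il <- enum C) lam C il * fj b x il t = fC lam C x.
Proof.
move=> hC; have [hz _ hrel] := hcc hC.
rewrite big_enum /= big_mkcond /=.
transitivity (\sum_i lam C i * fj b x i t).
  by apply: eq_bigr => i _; case: ifP => // /negbT /hz ->; rewrite mul0r.
rewrite /fj /fC.
under eq_bigr do rewrite mulrDr.
rewrite big_split /= [X in X + _](_ : _ = 0) ?add0r //.
under eq_bigr do rewrite big_distrr /=.
rewrite exchange_big /= big1 // => r _.
transitivity (t r * \sum_i lam C i * b r i); last by rewrite hrel mulr0.
rewrite big_distrr /=.
by apply: eq_bigr => i _; ring.
Qed.

Variable (s : seq 'I_n) (C : {set 'I_n}) (m : 'I_n).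
Hypothesis hC : circuit b C.
Hypothesis us : uniq s.
Hypothesis hs : size s = k.
Hypothesis hv : validb s C m.

Let e := enum C.
Let s' := [seq j <- s | j \notin C].
Let u := rem m e ++ s'.

Lemma me z : (z \in e) = (z \in C).
Proof. exact: mem_enum. Qed.

Lemma hsubm z : z \in C -> z != m -> z \in s.
Proof.
case/and3P: hv => _ _ /subsetP hsub zC nzm.
by move: (hsub z); rewrite !inE nzm zC => /(_ isT).
Qed.

Lemma perm_il il : il \in C -> perm_eq (il :: (rem il e ++ s')) (m :: s).
Proof.
case/and3P: hv => mC ms _ ilC.
have ue : uniq e := enum_uniq _.
apply: uniq_perm.
- rewrite /= cat_uniq rem_uniq // filter_uniq // andbT mem_cat negb_or.
  rewrite mem_rem_uniq // !inE eqxx /= mem_filter ilC /=.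
  apply/hasPn => z; rewrite mem_filter => /andP [zC _].
  by rewrite mem_rem_uniq // !inE; rewrite /e; move: (mem_enum C z) => ->; rewrite (negPf zC) andbF.
- by rewrite /= ms us.
have hre : forall z, (z \in rem il e) = (z != il) && (z \in C).
  by move=> z; rewrite mem_rem_uniq // !inE; rewrite /e; move: (mem_enum C z) => ->.
move=> z; rewrite in_cons mem_cat hre /s' mem_filter in_cons.
case: (eqVneq z il) => [->|nzil] /=.
  by case: (eqVneq il m) => [//|nilm]; rewrite (hsubm ilC nilm) orbT.
case: (eqVneq z m) => [->|nzm] /=; first by rewrite mC.
case: (boolP (z \in C)) => zC /=; last by [].
by rewrite (hsubm zC nzm).
Qed.

Lemma size_il il : il \in C -> size (rem il e ++ s') = k.
Proof. by move=> /perm_il /perm_size /= [->]. Qed.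

Lemma pu : perm_eq s u.
Proof.
case/and3P: hv => mC _ _.
by rewrite perm_sym -(perm_cons m); apply: perm_il.
Qed.


Lemma prod_il il t : il \in C -> inU b x t ->
  \prod_(l <- rem il e ++ s') (a l / fj b x l t) =
  (a m / fj b x m t) * \prod_(l <- s) (a l / fj b x l t) / (a il / fj b x il t).
Proof.
move=> ilC ht.
have h : \prod_(l <- il :: (rem il e ++ s')) (a l / fj b x l t) =
    \prod_(l <- m :: s) (a l / fj b x l t) := perm_big _ (perm_il ilC).
rewrite !big_cons /= in h.
have nz : a il / fj b x il t != 0 by rewrite mulf_neq0 ?invr_eq0 ?ha ?ht.
by rewrite -h [_ * \prod_(_ <- _) _]mulrC mulfK.
Qed.

Lemma rem_comm (T : eqType) (y z : T) (q : seq T) : uniq q ->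
  rem y (rem z q) = rem z (rem y q).
Proof.
move=> uq; rewrite (rem_filter z uq) (rem_filter y uq) (rem_filter y (filter_uniq _ uq)) (rem_filter z (filter_uniq _ uq)) -!filter_predI.
by apply: eq_filter => w /=; rewrite andbC.
Qed.

Lemma lam_m_neq0 : lam C m != 0.
Proof. by case/and3P: hv => mC _ _; exact: (circuit_supp hcc hC mC). Qed.

Lemma sign_il il : il \in C ->
  (-1) ^+ index m e * ((-1) ^+ index il e * dmk b (rem il e ++ s')) =
  lam C il / lam C m * dmk b u.
Proof.
move=> ilC.
have lm := lam_m_neq0.
case/and3P: hv => mC ms hsub.
have ue : uniq e := enum_uniq _.
have hre : forall y z, (z \in rem y e) = (z != y) && (z \in C).
  by move=> y z; rewrite mem_rem_uniq // !inE; rewrite /e; move: (mem_enum C z) => ->.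
case: (eqVneq il m) => [->|nilm].
  by rewrite mulrA sign2 mul1r divff // mul1r.
have mre : m \in rem il e by rewrite hre eq_sym nilm.
have ilre : il \in rem m e by rewrite hre nilm.
have e1 := @dmk_front R k n b m s' (rem il e) [::] mre (size_il ilC).
have e2 := @dmk_front R k n b il s' (rem m e) [::] ilre (size_il mC).
rewrite /= rem_comm // in e1; rewrite /= in e2.
set rho := rem il (rem m e) ++ s' in e1 e2.
have hsr : size (il :: rho) = k.
  by rewrite /rho -(size_il mC) size_cat (perm_size (perm_to_rem ilre)) /= size_cat.
have [hz _ hrel] := hcc hC.
pose c l := if l == m then 0 else - (lam C l / lam C m).
have hlin := @dmk_lin0 R k n b k0 c m rho.
rewrite hlin in e1; last first.
  move=> r; have := hrel r; rewrite (bigD1 m) //= => h.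
  rewrite (bigD1 m) //= /c eqxx mul0r add0r.
  have -> : \sum_(l < n | l != m) (if l == m then 0 else - (lam C l / lam C m)) * b r l
      = - (lam C m)^-1 * \sum_(l < n | l != m) lam C l * b r l.
    rewrite big_distrr /=; apply: eq_bigr => l /negPf ->; by ring.
  have -> : \sum_(l < n | l != m) lam C l * b r l = - (lam C m * b r m).
    by apply/eqP; rewrite -addr_eq0 addrC h.
  by rewrite mulrN mulNr opprK mulrA mulVf // mul1r.
rewrite (bigD1 il) //= big1 ?addr0 in e1; last first.
  move=> l nlil; rewrite /c; case: (eqVneq l m) => [_|nlm]; first by rewrite mul0r.
  case: (boolP (l \in C)) => lC; last by rewrite (hz _ lC) mul0r oppr0 mul0r.
  rewrite dmk_nuniq ?mulr0 //.
  rewrite /= negb_and negbK; apply/orP; left.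
  by rewrite /rho mem_cat (mem_rem_uniq _ (rem_uniq _ ue)) !inE hre nlil nlm lC.
rewrite e1 /c (negPf nilm) /u e2.
have nmil : m != il by rewrite eq_sym.
have iA := index_rem e nilm; have iB := index_rem e nmil.
have ile : il \in e by rewrite /e; move: (mem_enum C il) => ->.
have me' : m \in e by rewrite /e; move: (mem_enum C m) => ->.
have hne : index il e != index m e.
  by apply: contra_neq nilm => /(congr1 (nth il e)); rewrite !nth_index.
move: iA iB hne.
move: (index m (rem il e)) (index il (rem m e)) (index il e) (index m e) => A B I M.
case: (ltngtP I M) => hIM /= iA iB hne; last by [].
- rewrite -iA -iB addn1 addn0 exprS.
  by case: (sign_cases R[i] A) => ->; ring.
- rewrite -iA -iB addn1 addn0 exprS.
  by case: (sign_cases R[i] A) => ->; ring.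
Qed.


Lemma LC_valid t : inU b x t ->
  LC b x a C s t = wmk b x a s t * (a m / fj b x m t) * fC lam C x / lam C m.
Proof.
move=> ht.
have lm := lam_m_neq0.
case/and3P: hv => mC ms hsub.
have SC : [set j in s] :&: C = C :\ m.
  apply/setP => z; rewrite !inE.
  case: (eqVneq z m) => [->|nzm] /=; first by rewrite (negPf ms).
  by case: (boolP (z \in C)) => zC; rewrite ?andbT ?andbF // (hsubm zC nzm).
have hcard : (#|[set j in s] :&: C| == #|C|.-1)%N by rewrite SC (cardsD1 m C) mC.
rewrite /LC us hcard /=.
case: pickP => [im /andP [imC imS] | hn]; last by move: (hn m); rewrite mC inE ms.
have -> : im = m.
  apply/eqP; apply: contraNT imS => nim; rewrite inE.
  exact: hsubm.
rewrite -/e -/s' -/u.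
rewrite -mulrA big_distrr /=.
set P := \prod_(l <- s) (a l / fj b x l t).
rewrite (eq_big_seq (fun il => lam C il * fj b x il t *
   (dmk b u * (a m / fj b x m t) * P / lam C m))); last first.
  move=> il; rewrite /e; move: (mem_enum C il) => -> ilC.
  rewrite /wmk (prod_il ilC ht) -/e -/s'.
  have h := sign_il ilC.
  have nzf : fj b x il t != 0 by apply: ht.
  have nza : a il != 0 by apply: ha.
  transitivity (a il * ((-1) ^+ index m e * ((-1) ^+ index il e * dmk b (rem il e ++ s'))) *
     (a m / fj b x m t * P / (a il / fj b x il t))); first by rewrite -/P; ring.
  rewrite h; field.
  by rewrite lm (ht m) nzf nza.
rewrite -big_distrl /= sum_lam_f //.
have hp := @dmk_perm R k n b s u [::] us pu hs.
by rewrite /wmk -/P hp /=; ring.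
Qed.

End LCsec.


Section Main.
Variable (R : realType) (k n : nat) (b : 'M[R[i]]_(k, n)).
Variable (lam : {set 'I_n} -> 'I_n -> R[i]) (x a : 'I_n -> R[i]).
Hypothesis k0 : (0 < k)%N.
Hypothesis hcc : circuit_coeffs b lam.
Hypothesis ha : forall j, a j != 0.
Hypothesis hdisc : notin_disc b lam x.
Variable (j : 'I_n) (s : seq 'I_n).
Hypothesis hs : size s = k.

Lemma LC_novalid C t : (forall m, ~~ validb s C m) -> LC b x a C s t = 0.
Proof.
move=> nov; rewrite /LC; case: ifP => // /andP [us hcard].
case: pickP => // im /andP [imC imS].
exfalso; move/negP: (nov im); apply.
have sub1 : [set j in s] :&: C \subset C :\ im.
  apply/subsetP => z; rewrite !inE => /andP [zs zC]; rewrite zC andbT.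
  by apply: contraTneq zs => ->; move: imS; rewrite inE.
have : [set j in s] :&: C == C :\ im.
  by rewrite eqEcard sub1 /= (eqP hcard) (cardsD1 im C) imC.
move/eqP => eqS.
rewrite /validb imC /=; move: imS; rewrite inE => -> /=.
by rewrite -eqS subsetIl.
Qed.

Lemma LC_zero C t : dmk b s = 0 -> circuit b C -> inU b x t -> LC b x a C s t = 0.
Proof.
move=> hd hC ht.
case: (boolP (uniq s)) => us; last by rewrite /LC (negPf us).
case: (pickP (fun m => validb s C m)) => [m vm | nov].
  by rewrite (LC_valid k0 hcc ha hC us hs vm ht) /wmk hd !mul0r.
by apply: LC_novalid => m; rewrite nov.
Qed.


Lemma indep_card (D : {set 'I_n}) : (k < #|D|)%N -> ~~ indep b D.
Proof.
move=> hD; rewrite /indep -row_leq_rank -ltnNge.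
exact: (leq_ltn_trans (rank_leq_col _) hD).
Qed.

Lemma ex_circuit_sub (D0 : {set 'I_n}) : ~~ indep b D0 -> exists D : {set 'I_n}, (D \subset D0) && circuit b D.
Proof.
move: {2}#|D0| (leqnn #|D0|) => N; elim: N D0 => [|N IH] D0 hN hD0.
  have -> : D0 = set0 by apply/eqP; rewrite -cards_eq0 -leqn0.
  exists set0; rewrite sub0set /circuit.
  move: hD0; have -> : D0 = set0 by apply/eqP; rewrite -cards_eq0 -leqn0.
  move=> -> /=; apply/forallP => D; apply/implyP => /proper_card; by rewrite cards0.
case: (boolP (circuit b D0)) => hc; first by exists D0; rewrite subxx.
move: hc; rewrite /circuit hD0 /= negb_forall => /existsP [D].
rewrite negb_imply => /andP [pD nD].
have [D' /andP [sD' cD']] := IH D (leq_trans (proper_card pD) hN) nD.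
exists D'; apply/andP; split => //; exact: (subset_trans sD' (proper_sub pD)).
Qed.

Hypothesis hd : dmk b s != 0.

Lemma us : uniq s.
Proof. by apply: contraNT hd => nu; rewrite dmk_nuniq. Qed.

Lemma valid_exists m : m \notin s -> exists D, circuit b D && validb s D m.
Proof.
move=> ms.
have hcard : #|m |: [set z in s]| = k.+1.
  by rewrite cardsU1 inE ms cardsE (card_uniqP us) hs.
have hi : ~~ indep b (m |: [set z in s]) by apply: indep_card; rewrite hcard.
have [D /andP [sD cD]] := ex_circuit_sub hi.
exists D; apply/andP; split => //; rewrite /validb ms /=.
have hsub : D :\ m \subset [set z in s].
  apply/subsetP => z; rewrite in_setD1 => /andP [nzm zD].
  by move/subsetP: sD => /(_ z zD); rewrite !inE (negPf nzm).
rewrite hsub andbT.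
apply/negPn/negP => mD.
have [hz [l hl] hrel] := hcc cD.
have hsupp : forall i, i \notin s -> lam D i = 0.
  move=> i iS; apply: hz; apply: contra iS => iD.
  have : i \in D :\ m by rewrite in_setD1 iD andbT; apply: contraNneq mD => <-.
  by move/(subsetP hsub); rewrite inE.
by move: hl; rewrite (rel_s j us hs hd hsupp hrel l) eqxx.
Qed.

Lemma valid_uniq D D' m : circuit b D -> circuit b D' -> validb s D m -> validb s D' m -> D = D'.
Proof.
move=> cD cD' vD vD'.
move: (vD) (vD') => /and3P [mD ms sD] /and3P [mD' _ sD'].
have l1 := circuit_supp hcc cD mD; have l2 := circuit_supp hcc cD' mD'.
have [hz [_ _] hr] := hcc cD; have [hz' [_ _] hr'] := hcc cD'.
pose mu i := lam D' m * lam D i - lam D m * lam D' i.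
have hmu : forall i, mu i = 0.
  apply: (rel_s j us hs hd).
    move=> i iS; rewrite /mu.
    case: (eqVneq i m) => [->|nim]; first by rewrite mulrC subrr.
    have iD : i \notin D by apply: contra iS => iD; exact: (hsubm vD iD nim).
    have iD' : i \notin D' by apply: contra iS => iD2; exact: (hsubm vD' iD2 nim).
    by rewrite (hz i iD) (hz' i iD') !mulr0 subrr.
  move=> r; rewrite /mu.
  under eq_bigr do rewrite mulrBl -!mulrA.
  by rewrite sumrB -!big_distrr /= hr hr' !mulr0 subrr.
apply/setP => i.
have := hmu i; rewrite /mu => /eqP; rewrite subr_eq0 => /eqP h.
case: (boolP (i \in D)) => iD; case: (boolP (i \in D')) => iD' //.
- by have := mulf_neq0 l2 (circuit_supp hcc cD iD); rewrite h (hz' i iD') mulr0 eqxx.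
- by have := mulf_neq0 l1 (circuit_supp hcc cD' iD'); rewrite -h (hz i iD) mulr0 eqxx.
Qed.


Definition yv (r : 'I_k) : R[i] :=
  \sum_(q < k | nth j s q == j) invmx (Mb b s)^T r q.
Definition gv (m : 'I_n) : R[i] := \sum_r b r m * yv r.

Lemma gv_nth (q : 'I_k) : gv (nth j s q) = (nth j s q == j)%:R.
Proof.
have hu : (Mb b s)^T \in unitmx by rewrite unitmxE det_tr unitfE -dmkE.
have hM := mulmxV hu.
rewrite /gv /yv.
under eq_bigr do rewrite big_distrr /=.
rewrite exchange_big /=.
transitivity (\sum_(q' < k | nth j s q' == j) ((Mb b s)^T *m invmx (Mb b s)^T) q q').
  apply: eq_bigr => q' _; rewrite !mxE; apply: eq_bigr => r _.
  by rewrite !mxE (nth_map j) // hs.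
rewrite hM.
under eq_bigr do rewrite mxE.
case: (eqVneq (nth j s q) j) => hq.
  rewrite (bigD1 q) ?hq //= eqxx big1 ?addr0 // => q' /andP [_ nq].
  by rewrite eq_sym (negPf nq).
rewrite big1 // => q' hq'; case: (eqVneq q q') => [eqq|//].
by move: hq; rewrite eqq (eqP hq') eqxx.
Qed.

Lemma gv_s m : m \in s -> gv m = (m == j)%:R.
Proof.
move=> ms; have hq : (index m s < k)%N by rewrite -hs index_mem.
by have := gv_nth (Ordinal hq); rewrite /= nth_index.
Qed.

Definition rho (m : 'I_n) : R[i] := if j \in s then - gv m else (m == j)%:R.

Lemma ratio D m : circuit b D -> validb s D m -> lam D j / lam D m = rho m.
Proof.
move=> cD vD; move: (vD) => /and3P [mD ms sD].
have lm := circuit_supp hcc cD mD.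
have [hz _ hrel] := hcc cD.
rewrite /rho; case: ifP => js.
  have e0 : \sum_i lam D i * gv i = 0.
    rewrite /gv; under eq_bigr do rewrite big_distrr /=.
    rewrite exchange_big /= big1 // => r _.
    transitivity (yv r * \sum_i lam D i * b r i); last by rewrite hrel mulr0.
    rewrite big_distrr; apply: eq_bigr => i _; exact: (etrans (mulrA _ _ _) (mulrC _ _)).
  have e1 : \sum_(i | i != m) lam D i * gv i = lam D j.
    transitivity (\sum_(i | i != m) lam D i * (i == j)%:R).
      apply: eq_bigr => i nim; case: (boolP (i \in D)) => iD.
        by rewrite gv_s // (hsubm vD iD nim).
      by rewrite hz // !mul0r.
    have njm : j != m by apply: contraNneq ms => <-.
    rewrite (bigD1 j) //= eqxx mulr1 big1 ?addr0 // => i /andP [_ nij].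
    by rewrite (negPf nij) mulr0.
  move: e0; rewrite (bigD1 m) //= e1 => /eqP; rewrite addrC addr_eq0 => /eqP ->.
  by field.
case: (eqVneq m j) => [emj|nmj]; first by rewrite -emj divff.
have jD : j \notin D.
  apply: contraFN js => jD; apply: (hsubm vD jD); by rewrite eq_sym.
by rewrite (hz j jD) mul0r.
Qed.

Definition Gam (m : 'I_n) : {set 'I_n} :=
  odflt set0 [pick D | circuit b D && validb s D m].

Lemma GamP m : m \notin s -> circuit b (Gam m) && validb s (Gam m) m.
Proof.
move=> ms; rewrite /Gam; case: pickP => [D -> //|h].
have [D hD] := valid_exists ms; by rewrite h in hD.
Qed.

Lemma Kj_basis t : inU b x t ->
  Kj b lam x a j s t = \sum_(m | m \notin s) rho m * (a m / fj b x m t) * wmk b x a s t.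
Proof.
move=> ht.
pose X m := rho m * (a m / fj b x m t) * wmk b x a s t.
rewrite /Kj.
transitivity (\sum_(C | circuit b C) \sum_(m | m \notin s) (if C == Gam m then X m else 0)).
  apply: eq_bigr => C cC.
  case: (pickP (validb s C)) => [m vm | nov].
    move: (vm) => /and3P [mC ms _].
    rewrite (LC_valid k0 hcc ha cC us hs vm ht).
    rewrite (bigD1 m) //= (_ : C == Gam m); last first.
      by case/andP: (GamP ms) => cG vG; apply/eqP; apply: (valid_uniq cC cG vm vG).
    rewrite big1 ?addr0; last first.
      move=> m' /andP [m's nm'm]; case: ifP => // /eqP eC.
      case/andP: (GamP m's) => _; rewrite -eC => /and3P [m'C _ _].
      by move: m's; rewrite (hsubm vm m'C nm'm).
    rewrite /X -(ratio cC vm).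
    have fC0 := hdisc cC.
    have lm := circuit_supp hcc cC mC.
    by field; rewrite fC0 lm (ht m).
  rewrite LC_novalid ?mulr0; last by move=> m; rewrite nov.
  rewrite big1 // => m ms; case: ifP => // /eqP eC.
  by case/andP: (GamP ms) => _; rewrite -eC nov.
rewrite exchange_big /=; apply: eq_bigr => m ms.
case/andP: (GamP ms) => cG _.
rewrite (bigD1 (Gam m)) //= eqxx big1 ?addr0 // => C /andP [_ nC].
by rewrite (negPf nC).
Qed.

End Main.

Unset Implicit Arguments.
Set Strict Implicit.

Theorem corollary3p9 (R : realType) (k n : nat) (b : 'M[R[i]]_(k, n))
  (lam : {set 'I_n} -> 'I_n -> R[i]) (x a : 'I_n -> R[i]) :
  (0 < k)%N -> (k < n)%N ->
  (forall j : 'I_n, col j b != 0) ->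
  \rank b = k ->
  circuit_coeffs b lam ->
  (forall j, a j != 0) ->
  notin_disc b lam x ->
  unbalanced b x a ->
  forall (j : 'I_n) (s : seq 'I_n), size s = k ->
    qeq b x a (fun t => a j / fj b x j t * wmk b x a s t) (Kj b lam x a j s).
Proof.
move=> k0 _ _ _ hcc ha hdisc _ j s hs.
have reg0 : regular b x (fun _ => 0).
  by exists 0, (fun _ => 0%N) => t _; rewrite meval0 mul0r.
case: (eqVneq (dmk b s) 0) => hd.
  exists (fun _ _ => 0); split => // t ht.
  have K0 : Kj b lam x a j s t = 0.
    by rewrite /Kj big1 // => C cC; rewrite (LC_zero k0 hcc ha hs hd cC ht) mulr0.
  rewrite K0 /wmk hd !mul0r mulr0 subrr.
  by rewrite big1 // => i _; rewrite mul0r.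
have us : uniq s by apply: contraNT hd => nu; rewrite dmk_nuniq.
case: (boolP (j \in s)) => js.
  exists (fun r t => yv b j s r * wmk b x a s t); split.
    move=> r.
    exists ((yv b j s r * dmk b s * \prod_(l <- s) a l)%:MP),
      (fun l => nat_of_bool (l \in s)) => t ht.
    rewrite mevalC /wmk prodf_div.
    have -> : \prod_(l <- s) fj b x l t = \prod_(l < n) fj b x l t ^+ (l \in s).
      rewrite big_uniq //= big_mkcond /=; apply: eq_bigr => l _.
      by case: (l \in s); rewrite ?expr1 ?expr0.
    by rewrite !mulrA.
  move=> t ht.
  rewrite (Kj_basis k0 hcc ha hdisc j hs hd ht) /rho js.
  have eR : \sum_r (yv b j s r * wmk b x a s t) * dPhi b x a r t =
      wmk b x a s t * \sum_m gv b j s m * (a m / fj b x m t).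
    rewrite /dPhi /gv.
    under eq_bigr do rewrite big_distrr /=.
    rewrite exchange_big big_distrr /=; apply: eq_bigr => m _.
    rewrite big_distrl big_distrr /=; apply: eq_bigr => r _.
    by ring.
  have eS : \sum_m gv b j s m * (a m / fj b x m t) =
      a j / fj b x j t + \sum_(m | m \notin s) gv b j s m * (a m / fj b x m t).
    rewrite (bigID (mem s)) /=; congr (_ + _).
    rewrite (bigD1 j) //= (gv_s j hs hd js) eqxx mul1r big1 ?addr0 // => m /andP [ms nmj].
    by rewrite (gv_s j hs hd ms) (negPf nmj) mul0r.
  have eK : \sum_(m | m \notin s) - gv b j s m * (a m / fj b x m t) * wmk b x a s t =
      - (wmk b x a s t * \sum_(m | m \notin s) gv b j s m * (a m / fj b x m t)).
    rewrite big_distrr -sumrN; apply: eq_bigr => m _.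
    transitivity (- (wmk b x a s t * (gv b j s m * (a m / fj b x m t)))); first ring.
    by [].
  rewrite eR eS eK; ring.
exists (fun _ _ => 0); split => // t ht.
rewrite (Kj_basis k0 hcc ha hdisc j hs hd ht) /rho (negPf js).
rewrite (bigD1 j) //= eqxx mul1r big1 ?addr0.
  by rewrite subrr big1 // => i _; rewrite mul0r.
by move=> m /andP [_]; case: eqP => //= _ _; rewrite !mul0r.
Qed.
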